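(* Let $V=X\cup Y$ be a finite family of L-frames, where every L-frame in $X$ is anchored at $D$ from above and every L-frame in $Y$ is anchored at $D$ from below. Let $\mathrm{OPT}$, $\mathrm{OPT}_X$, $\mathrm{OPT}_Y$ be minimum dominating sets of the intersection graphs of $V$, $X$, $Y$ respectively. Then $|\mathrm{OPT}_X|\le|\mathrm{OPT}|$ and $|\mathrm{OPT}_Y|\le|\mathrm{OPT}|$.
   Context: Fix a line $D$ of slope $-1$. An L-frame is the union of a closed horizontal segment and a closed vertical segment sharing an endpoint (the corner). It is anchored at $D$ from above if its corner is on $D$ and its segments go right and up from the corner; anchored from below if its corner is on $D$ and its segments go left and down from the corner. The intersection graph joins two L-frames iff they intersect; a dominating set is a vertex set such that every other vertex has a neighbour in it. *)

(* Defs.v *)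
From HB Require Import structures.
From mathcomp Require Import all_boot all_order all_algebra.
Set Implicit Arguments. Unset Strict Implicit. Unset Printing Implicit Defensive.
Import Order.TTheory GRing.Theory Num.Theory.
Local Open Scope ring_scope.

(* An L-frame: corner (cx, cy), a horizontal closed segment from the corner
   to (cx + hl, cy) and a vertical closed segment from the corner to
   (cx, cy + vl). The signs of hl, vl give the directions. *)
Record Lframe (R : realFieldType) := MkLframe { cx : R; cy : R; hl : R; vl : R }.

Definition betw (R : realFieldType) (a b t : R) : bool :=
  (Num.min a b <= t) && (t <= Num.max a b).

Definition onL (R : realFieldType) (f : Lframe R) (q : R * R) : bool :=
  ((q.2 == cy f) && betw (cx f) (cx f + hl f) q.1)
  || ((q.1 == cx f) && betw (cy f) (cy f + vl f) q.2).

Definition intersects (R : realFieldType) (f g : Lframe R) : Prop :=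
  exists q : R * R, onL f q && onL g q.

(* The line D of slope -1 is { (x,y) | x + y = c }. *)
Definition anchored_above (R : realFieldType) (c : R) (f : Lframe R) : Prop :=
  cx f + cy f = c /\ 0 < hl f /\ 0 < vl f.

Definition anchored_below (R : realFieldType) (c : R) (f : Lframe R) : Prop :=
  cx f + cy f = c /\ hl f < 0 /\ vl f < 0.

(* Intersection graph on the vertex set W (indices of the family F):
   u, v adjacent iff u != v and F u, F v intersect.
   S is a dominating set of the graph induced on W. *)
Definition dominating (R : realFieldType) (I : finType) (F : I -> Lframe R)
  (W S : {set I}) : Prop :=
  S \subset W /\
  forall v, v \in W -> v \notin S ->
    exists2 u, u \in S & (u != v) /\ intersects (F u) (F v).

Definition min_dominating (R : realFieldType) (I : finType) (F : I -> Lframe R)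
  (W S : {set I}) : Prop :=
  dominating F W S /\ forall S', dominating F W S' -> (#|S| <= #|S'|)%N.

(* Main.v *)
Require Import Defs.
From HB Require Import structures.
From mathcomp Require Import all_boot all_order all_algebra.
From mathcomp Require Import lra.
Import Order.TTheory GRing.Theory Num.Theory.
Local Open Scope ring_scope.

Section Aux.
Variable R : realFieldType.

Lemma betw_pos (a h t : R) : 0 < h -> betw a (a + h) t -> a <= t /\ t <= a + h.
Proof.
move=> h0 /andP[H1 H2].
have ha : a <= a + h by lra.
by rewrite min_l // in H1; rewrite max_r // in H2.
Qed.

Lemma betw_neg (a h t : R) : h < 0 -> betw a (a + h) t -> a + h <= t /\ t <= a.
Proof.
move=> h0 /andP[H1 H2].
have ha : a + h <= a by lra.
by rewrite min_r // in H1; rewrite max_l // in H2.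
Qed.

Lemma corner_on (f : Lframe R) : onL f (cx f, cy f).
Proof.
apply/orP; left; apply/andP; split => //=.
apply/andP; split; [rewrite ge_min lexx // | rewrite le_max lexx //].
Qed.

Lemma ab_corner (c : R) (a b : Lframe R) (q : R * R) :
  anchored_above c a -> anchored_below c b -> onL a q -> onL b q ->
  cx a = cx b /\ cy a = cy b.
Proof.
case: q => x y.
move=> [Ha [ha va]] [Hb [hb vb]] /orP[/andP[/eqP /= Ey /(betw_pos _ _ _ ha) [A1 A2]] | /andP[/eqP /= Ex /(betw_pos _ _ _ va) [A1 A2]]]
  /orP[/andP[/eqP /= Ey' /(betw_neg _ _ _ hb) [B1 B2]] | /andP[/eqP /= Ex' /(betw_neg _ _ _ vb) [B1 B2]]];
  split; lra.
Qed.

Lemma reduce (I : finType) (F : I -> Lframe R) (A OPT : {set I}) :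
  dominating F [set: I] OPT ->
  (forall u v, v \in A -> u \notin A -> intersects (F u) (F v) ->
      cx (F u) = cx (F v) /\ cy (F u) = cy (F v)) ->
  exists S, dominating F A S /\ (#|S| <= #|OPT|)%N.
Proof.
move=> [_ Hd] Hc.
pose g u := if u \in A then u else
  odflt u [pick x in A | (cx (F x) == cx (F u)) && (cy (F x) == cy (F u))].
exists (A :&: (g @: OPT)); split; last first.
  by apply: leq_trans (subset_leq_card (subsetIr _ _)) (leq_imset_card _ _).
split; first exact: subsetIl.
move=> v vA vS.
have vO : v \notin OPT.
  apply/negP => vO; move/negP: vS; apply; rewrite inE vA /=.
  by apply/imsetP; exists v => //; rewrite /g vA.
have [u uO [uv Hi]] := Hd v (in_setT v) vO.
case uA: (u \in A).
  exists u; last by [].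
  by rewrite inE uA /=; apply/imsetP; exists u => //; rewrite /g uA.
have [E1 E2] := Hc u v vA (negbT uA) Hi.
case Ep: [pick x in A | (cx (F x) == cx (F u)) && (cy (F x) == cy (F u))] => [x|]; last first.
  move: Ep; case: pickP => [y _ //|Hn _]. by move: (Hn v); rewrite /= vA E1 E2 !eqxx.
have := Ep; case: pickP => [x' + [?] |//]; subst x'; move=> /andP[xA /andP[/eqP Ex /eqP Ey]].
have xS : x \in A :&: (g @: OPT).
  by rewrite inE xA /=; apply/imsetP; exists u => //; rewrite /g uA Ep.
exists x => //; split.
  by apply/eqP => xv; move/negP: vS; apply; rewrite -xv.
exists (cx (F v), cy (F v)); rewrite corner_on andbT.
by rewrite -E1 -E2 -Ex -Ey; apply: corner_on.
Qed.

End Aux.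

Theorem mainTheorem6 (R : realFieldType) (c : R) (I : finType)
  (F : I -> Lframe R) (X Y : {set I})
  (hXY : X :|: Y = [set: I]) (hdisj : [disjoint X & Y])
  (hX : forall i, i \in X -> anchored_above c (F i))
  (hY : forall i, i \in Y -> anchored_below c (F i))
  (OPT OPTX OPTY : {set I})
  (hOPT : min_dominating F [set: I] OPT)
  (hOPTX : min_dominating F X OPTX)
  (hOPTY : min_dominating F Y OPTY) :
  (#|OPTX| <= #|OPT|)%N /\ (#|OPTY| <= #|OPT|)%N.
Proof.
have inXY : forall u, u \notin X -> u \in Y.
  by move=> u uX; have := in_setT u; rewrite -hXY inE (negbTE uX).
have inYX : forall u, u \notin Y -> u \in X.
  by move=> u uY; have := in_setT u; rewrite -hXY inE (negbTE uY) orbF.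
split.
- have [S [HS HSc]] : exists S, dominating F X S /\ (#|S| <= #|OPT|)%N.
    apply: (@reduce _ _ F X OPT hOPT.1) => u v vX uX [q /andP[Hu Hv]].
    have [E1 E2] := ab_corner _ _ _ _ _ (hX v vX) (hY u (inXY u uX)) Hv Hu.
    by split.
  exact: leq_trans (hOPTX.2 S HS) HSc.
- have [S [HS HSc]] : exists S, dominating F Y S /\ (#|S| <= #|OPT|)%N.
    apply: (@reduce _ _ F Y OPT hOPT.1) => u v vY uY [q /andP[Hu Hv]].
    exact: ab_corner _ _ _ _ _ (hX u (inYX u uY)) (hY v vY) Hu Hv.
  exact: leq_trans (hOPTY.2 S HS) HSc.
Qed.
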